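(* Let $a$ be a point of $AG(4,3)$ and let $L_1,L_2,L_3,L_4$ be four distinct $a$-lines whose $8$ points are not co-hyperplanar. Then there are exactly eight demicaps with anchor point $a$ that contain $L_1\cup L_2\cup L_3\cup L_4$.
   Context: $AG(4,3)$ is the affine space $\mathbb{F}_3^4$; a line is a set of three distinct points $\{x,y,z\}$ with $x+y+z=0$. A cap is a set of points containing no line. A hyperplane is a $3$-dimensional affine subspace of $\mathbb{F}_3^4$; a set of points is co-hyperplanar if it lies in a common hyperplane. For a point $a$, an $a$-line is a pair of points $\{b,c\}$ such that $\{a,b,c\}$ is a line. A demicap with anchor point $a$ is a cap consisting of the $10$ points of five $a$-lines such that no four of these five $a$-lines are co-hyperplanar. *)

(* Defs.v *)
(* AG(4,3) = F_3^4 as row vectors 'rV['F_3]_4. *)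
From mathcomp Require Import all_boot all_order all_algebra all_fingroup.
Set Implicit Arguments. Unset Strict Implicit. Unset Printing Implicit Defensive.
Import GRing.Theory.
Local Open Scope ring_scope.

Definition Point := 'rV['F_3]_4.

Definition is_line (x y z : Point) : bool :=
  [&& x != y, y != z, x != z & x + y + z == 0].

Definition cap (S : {set Point}) : bool :=
  [forall x in S, forall y in S, forall z in S, ~~ is_line x y z].

Definition hyperplane (H : {set Point}) : bool :=
  [exists p : Point, exists V : 'M['F_3]_4,
     (\rank V == 3)%N && (H == [set x : Point | (x - p <= V)%MS])].

Definition cohyperplanar (S : {set Point}) : bool :=
  [exists H : {set Point}, hyperplane H && (S \subset H)].

Definition aline (a : Point) (L : {set Point}) : bool :=
  [exists b : Point, exists c : Point, (L == [set b; c]) && is_line a b c].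

Definition demicap (a : Point) (D : {set Point}) : bool :=
  cap D && (#|D| == 10)%N &&
  [exists F : {set {set Point}},
     [&& #|F| == 5,
         [forall L in F, aline a L],
         D == cover F &
         [forall G : {set {set Point}},
            (G \subset F) && (#|G| == 4) ==> ~~ cohyperplanar (cover G)]]].

(* Main.v *)
Require Import Defs.
From mathcomp Require Import all_boot all_order all_algebra all_fingroup.
Set Implicit Arguments. Unset Strict Implicit. Unset Printing Implicit Defensive.
Import GRing.Theory.
Local Open Scope ring_scope.

Lemma F3cases (x : 'F_3) : [|| x == 0, x == 1 | x == -1].
Proof. by case: x => [[|[|[|n]]] Hn]. Qed.
Lemma F3_3 : (3%:R : 'F_3) = 0. Proof. by apply/eqP. Qed.
Lemma F3_1N1 : (1 : 'F_3) != -1. Proof. by []. Qed.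
Lemma F3_nz (x : 'F_3) : x != 0 -> x = 1 \/ x = -1.
Proof. by case/or3P: (F3cases x) => /eqP->; [rewrite eqxx | left | right]. Qed.

Lemma three (v : Point) : v + v + v = 0.
Proof.
have: v *+ 3 = 0 by rewrite -scaler_nat F3_3 scale0r.
by rewrite mulrS mulr2n addrC.
Qed.
Lemma twice (v : Point) : v + v = - v.
Proof. by apply/eqP; rewrite -addr_eq0 three. Qed.

Definition aL (a u : Point) : {set Point} := [set a + u; a - u].

Lemma addrI' (a u : Point) : (a + u == a) = (u == 0).
Proof. by rewrite -subr_eq0 addrC addKr. Qed.
Lemma subrI' (a u : Point) : (a - u == a) = (u == 0).
Proof. by rewrite addrI' oppr_eq0. Qed.
Lemma pm_neq (a u : Point) : (a + u == a - u) = (u == 0).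
Proof.
by rewrite -subr_eq0 opprB addrA -(addrA a u u) addrC addKr twice oppr_eq0.
Qed.

Lemma aline_aL a u : u != 0 -> aline a (aL a u).
Proof.
move=> u0; apply/existsP; exists (a+u); apply/existsP; exists (a-u).
rewrite eqxx /= /is_line [a == a + u]eq_sym [a == a - u]eq_sym addrI' subrI' pm_neq u0 /=.
by rewrite -addrA addrACA subrr addr0 addrA three.
Qed.

Lemma alineP a L : aline a L -> exists2 u, u != 0 & L = aL a u.
Proof.
case/existsP => b /existsP [c /andP [/eqP -> /and4P [ab bc ac /eqP s]]].
exists (b - a); first by rewrite subr_eq0 eq_sym.
have -> : c = - (a + b) by apply/eqP; rewrite -addr_eq0 addrC s.
rewrite /aL (addrC a (b - a)) subrK opprB addrA twice opprD.
done.
Qed.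

Lemma mem_aL x a u : (x \in aL a u) = (x == a + u) || (x == a - u).
Proof. by rewrite in_set2. Qed.

Lemma aLN a u : aL a (- u) = aL a u.
Proof. by apply/setP => x; rewrite !mem_aL opprK orbC. Qed.

Lemma aL_pt a u v : a + v \in aL a u -> v = u \/ v = - u.
Proof. by rewrite mem_aL => /orP [] /eqP /addrI ->; [left|right]. Qed.

Lemma aL_dir a u x : x \in aL a u -> aL a (x - a) = aL a u.
Proof.
move=> xu; have : a + (x - a) \in aL a u by rewrite addrC subrK.
by case/aL_pt => ->; rewrite ?aLN.
Qed.

Lemma aL_meet a u v x : x \in aL a u -> x \in aL a v -> aL a u = aL a v.
Proof. by move=> /aL_dir <- /aL_dir <-. Qed.

Lemma aL_sign a u v : aL a u = aL a v -> v = u \/ v = - u.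
Proof. move=> E; have : a + v \in aL a u by rewrite E !inE eqxx. exact: aL_pt. Qed.

Lemma a_notin_aL a u : u != 0 -> a \notin aL a u.
Proof. by move=> u0; rewrite mem_aL ![a == _]eq_sym addrI' subrI' (negbTE u0). Qed.

Lemma card_aL a u : u != 0 -> #|aL a u| = 2.
Proof. by move=> u0; rewrite cards2 pm_neq u0. Qed.

Lemma diffE (a r p : Point) : (a + r - p) - (a - r - p) = - r.
Proof.
by rewrite opprB addrA subrK opprB addrA -(addrA a r r) addrC addKr twice.
Qed.

Lemma cohypB a (R : 'M['F_3]_4) :
  cohyperplanar (\bigcup_(i < 4) aL a (row i R)) = ~~ row_free R.
Proof.
apply/idP/idP.
  case/existsP => H /andP [/existsP [p /existsP [V /andP [/eqP rV /eqP HE]]] sub].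
  apply/negP => fr.
  have RV : (R <= V)%MS.
    apply/row_subP => i.
    have h1 : a + row i R \in H.
      by apply: (subsetP sub); apply/bigcupP; exists i => //; rewrite !inE eqxx.
    have h2 : a - row i R \in H.
      by apply: (subsetP sub); apply/bigcupP; exists i => //; rewrite !inE eqxx orbT.
    rewrite HE !inE in h1 h2.
    have h2' : (- (a - row i R - p) <= V)%MS by rewrite eqmx_opp.
    by have := addmx_sub h1 h2'; rewrite diffE eqmx_opp.
  have := mxrankS RV; rewrite rV.
  by move: fr; rewrite /row_free => /eqP ->.
move=> nfr.
have rk : (\rank R < 4)%N by rewrite ltn_neqAle rank_leq_row andbT.
have [C CE] : {C | C = cokermx R} by exists (cokermx R).
have Cnz : C != 0 by rewrite CE -mxrank_eq0 mxrank_coker subn_eq0 -ltnNge.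
have [i [j Cij]] : exists i j, C i j != 0.
  case: (pickP (fun ij : 'I_4 * 'I_4 => C ij.1 ij.2 != 0)) => [[i j] /= Cij | H0].
    by exists i, j.
  have Cz : C = 0.
    apply/matrixP => i j.
    by have := H0 (i, j); rewrite /= => /negbFE /eqP ->; rewrite [RHS]mxE.
  by move: Cnz; rewrite Cz eqxx.
set c := col j C.
have rc : \rank c = 1%N.
  apply/eqP; rewrite eqn_leq rank_leq_col lt0n mxrank_eq0.
  by apply/eqP => /matrixP /(_ i 0); rewrite !mxE; apply/eqP.
set V := kermx c.
have rV : \rank V = 3%N by rewrite mxrank_ker rc.
apply/existsP; exists [set x | (x - a <= V)%MS]; apply/andP; split.
  by apply/existsP; exists a; apply/existsP; exists V; rewrite rV !eqxx.
have rC : forall r : Point, (r <= R)%MS -> (r <= V)%MS.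
  move=> r; rewrite submxE -CE => /eqP rC0; apply/sub_kermxP.
  by rewrite /c colE mulmxA rC0 mul0mx.
apply/subsetP => x /bigcupP [k _]; rewrite mem_aL inE => /orP [] /eqP ->.
  by rewrite (addrC a) addrK; apply: rC; apply: row_sub.
by rewrite (addrC a) addrK eqmx_opp; apply: rC; apply: row_sub.
Qed.

Definition o0 : 'I_4 := @Ordinal 4 0 isT.
Definition o1 : 'I_4 := @Ordinal 4 1 isT.
Definition o2 : 'I_4 := @Ordinal 4 2 isT.
Definition o3 : 'I_4 := @Ordinal 4 3 isT.

Lemma ord4 (i : 'I_4) : [\/ i = o0, i = o1, i = o2 | i = o3].
Proof.
case: i => [[|[|[|[|n]]]] Hi]; [constructor 1|constructor 2|constructor 3|constructor 4|by []];
  exact: val_inj.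
Qed.

Lemma bigcup4 (T : finType) (f : 'I_4 -> {set T}) :
  \bigcup_(i < 4) f i = f o0 :|: f o1 :|: f o2 :|: f o3.
Proof.
apply/setP => x; apply/bigcupP/idP.
  by case=> i _; case: (ord4 i) => -> xi; rewrite !inE xi ?orbT.
by rewrite !inE => /orP [/orP [/orP [h|h]|h]|h]; [exists o0|exists o1|exists o2|exists o3].
Qed.

Lemma sum4 (V : zmodType) (f : 'I_4 -> V) :
  \sum_(i < 4) f i = f o0 + f o1 + f o2 + f o3.
Proof.
rewrite !big_ord_recl big_ord0 addr0 !addrA.
by congr (_ + _ + _ + _); congr f; apply: val_inj.
Qed.

Lemma cover4 (T : finType) (A B C D : {set T}) :
  cover [set A; B; C; D] = A :|: B :|: C :|: D.
Proof.
apply/setP => x; apply/bigcupP/idP.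
  case=> L HL xL; move: HL; rewrite !inE => /orP [/orP [/orP [/eqP e|/eqP e]|/eqP e]|/eqP e]; by rewrite -e xL ?orbT.
by rewrite !inE => /orP [/orP [/orP [h|h]|h]|h]; [exists A|exists B|exists C|exists D]; rewrite ?inE ?eqxx ?orbT.
Qed.

Definition m4 (u1 u2 u3 u4 : Point) : 'M['F_3]_4 :=
  \matrix_(i < 4) nth 0 [:: u1; u2; u3; u4] i.

Lemma cover_m4 a u1 u2 u3 u4 :
  \bigcup_(i < 4) aL a (row i (m4 u1 u2 u3 u4)) =
  aL a u1 :|: aL a u2 :|: aL a u3 :|: aL a u4.
Proof. by rewrite bigcup4 !rowK. Qed.

Lemma m4_dep u1 u2 u3 u4 : u1 + u2 + u3 = 0 -> ~~ row_free (m4 u1 u2 u3 u4).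
Proof.
move=> s; apply/negP => fr.
pose v : 'rV['F_3]_4 := \row_i nth 0 [:: 1; 1; 1; 0] i.
have : v *m m4 u1 u2 u3 u4 == 0.
  by rewrite mulmx_sum_row sum4 !rowK !mxE /= !scale1r scale0r addr0 s.
rewrite mulmx_free_eq0 // => /eqP /matrixP /(_ 0 o0).
by rewrite !mxE /=; apply/eqP; rewrite oner_eq0.
Qed.

Lemma pt_dir a L w x : L = aL a w -> w != 0 -> x \in L -> x - a != 0 /\ L = aL a (x - a).
Proof.
move=> -> w0 xL; split; last by rewrite (aL_dir xL).
rewrite subr_eq0; apply/eqP => xa; move: xL; rewrite xa.
by move/negP: (a_notin_aL a w0).
Qed.

Lemma two_same a x y z w : x + y + z = 0 -> x != y -> x \in aL a w -> y \in aL a w -> z = a.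
Proof.
move=> s xy; rewrite !mem_aL.
have hz : z = - (x + y) by apply/eqP; rewrite -addr_eq0 addrC s.
have key : (x + y = a + w + (a - w)) -> z = a.
  move=> e; rewrite hz e addrACA subrr addr0 twice opprK //.
case/orP => /eqP ex; case/orP => /eqP ey; rewrite ex ey ?eqxx in xy *; try done; by apply: key; rewrite ex ey // addrC.

Qed.

Lemma set3E (T : finType) (A B C : T) : [set A; B; C] = A |: (B |: [set C]).
Proof. by apply/setP => x; rewrite !inE !orbA. Qed.
Lemma set4E (T : finType) (A B C D : T) : [set A; B; C; D] = A |: (B |: (C |: [set D])).
Proof. by apply/setP => x; rewrite !inE !orbA. Qed.
Lemma card3_le (T : finType) (A B C : T) : (#|[set A; B; C]| <= 3)%N.
Proof. by rewrite set3E !cardsU1 cards1; case: (_ \notin _); case: (_ \notin _). Qed.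
Lemma card4E (T : finType) (A B C D : T) : A != B -> A != C -> A != D -> B != C -> B != D -> C != D ->
  #|[set A; B; C; D]| = 4.
Proof.
move=> ab ac ad bc bd cd.
by rewrite set4E !cardsU1 cards1 !inE (negbTE ab) (negbTE ac) (negbTE ad) (negbTE bc) (negbTE bd) (negbTE cd).
Qed.

Lemma sum3a (x y z a : Point) : x + y + z = 0 -> (x - a) + (y - a) + (z - a) = 0.
Proof. by move=> s; rewrite (addrACA x) (addrACA (x + y)) s add0r -!opprD three oppr0. Qed.

Lemma cap_lines a (F : {set {set Point}}) :
  (forall L, L \in F -> aline a L) -> (3 < #|F|)%N ->
  (forall G : {set {set Point}}, G \subset F -> #|G| = 4 -> ~~ cohyperplanar (cover G)) ->
  cap (cover F).
Proof.
move=> alF cF hG.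
have dirF : forall L x, L \in F -> x \in L -> x - a != 0 /\ L = aL a (x - a).
  by move=> L x LF xL; have [w w0 Ew] := alineP (alF _ LF); exact: pt_dir Ew w0 xL.
apply/forallP => x; apply/implyP => /bigcupP [Lx Fx xLx].
apply/forallP => y; apply/implyP => /bigcupP [Ly Fy yLy].
apply/forallP => z; apply/implyP => /bigcupP [Lz Fz zLz].
apply/negP => /and4P [xy yz xz /eqP s].
have [u0 Eu] := dirF _ _ Fx xLx.
have [v0 Ev] := dirF _ _ Fy yLy.
have [w0 Ew] := dirF _ _ Fz zLz.
have nLxy : Lx != Ly.
  apply/eqP => E; have za : z = a by apply: (two_same (w := x - a) s xy); rewrite -Eu // E.
  by move: w0; rewrite za subrr eqxx.
have nLyz : Ly != Lz.
  apply/eqP => E; have xa : x = a.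
    apply: (two_same (x:=y) (y:=z) (w := y - a) _ yz); rewrite -?Ev //; last by rewrite E.
    by rewrite addrC addrA.
  by move: u0; rewrite xa subrr eqxx.
have nLxz : Lx != Lz.
  apply/eqP => E; have ya : y = a.
    apply: (two_same (x:=x) (y:=z) (w := x - a) _ xz); rewrite -?Eu //; last by rewrite E.
    by rewrite addrAC.
  by move: v0; rewrite ya subrr eqxx.
have : ~~ (F \subset [set Lx; Ly; Lz]).
  by apply/negP => /subset_leq_card /leq_trans /(_ (card3_le _ _ _)); rewrite leqNgt cF.
case/subsetPn => Lt FLt; rewrite !inE => nLt.
have [t t0 Et] := alineP (alF _ FLt).
set G := [set Lx; Ly; Lz; Lt].
have GF : G \subset F.
  by apply/subsetP => L; rewrite !inE => /orP [/orP [/orP [/eqP->|/eqP->]|/eqP->]|/eqP->].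
have cG : #|G| = 4.
  move: nLt; rewrite ![Lt == _]eq_sym.
  case: (Lx =P Lt); case: (Ly =P Lt); case: (Lz =P Lt) => //= h1 h2 h3 _.
  by rewrite /G; apply: card4E =>//; apply/eqP.
have := hG G GF cG.
rewrite /G cover4 Eu Ev Ew Et -cover_m4 cohypB negbK.
by apply/negP; apply: m4_dep; apply: sum3a.
Qed.

Definition Rep (l : 'I_4) (k : 'rV['F_3]_4) : 'M['F_3]_4 :=
  \matrix_(i, c) if i == l then k 0 c else (i == c)%:R.

Lemma RepE l k (v : 'rV['F_3]_4) c :
  (v *m Rep l k) 0 c = v 0 l * k 0 c + (if c == l then 0 else v 0 c).
Proof.
rewrite mxE (bigD1 l) //= mxE eqxx; congr (_ + _).
case: eqP => [-> | /eqP cl].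
  by apply: big1 => i il; rewrite mxE (negbTE il) mulr0.
rewrite (bigD1 c) //= mxE (negbTE cl) eqxx mulr1 big1 ?addr0 // => i /andP [il ic].
by rewrite mxE (negbTE il) (negbTE ic) mulr0.
Qed.

Lemma Rep_free l k : row_free (Rep l k) = (k 0 l != 0).
Proof.
apply/idP/idP.
  move=> fr; apply/negP => /eqP kl0.
  pose v : 'rV['F_3]_4 := delta_mx 0 l - k.
  have : v *m Rep l k == 0.
    apply/eqP/rowP => c; rewrite RepE !mxE !eqxx kl0 /= subr0 mul1r.
    case: eqP => [-> | /eqP cl]; first by rewrite kl0 addr0.
    by rewrite /= sub0r subrr.
  rewrite mulmx_free_eq0 // => /eqP /rowP /(_ l).
  by rewrite !mxE !eqxx kl0 subr0 /=; apply/eqP; rewrite oner_eq0.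
move=> kl; apply: inj_row_free => v H.
have h : forall c, v 0 l * k 0 c + (if c == l then 0 else v 0 c) = 0.
  by move=> c; rewrite -RepE H mxE.
have vl : v 0 l = 0.
  by have := h l; rewrite eqxx addr0 => /eqP; rewrite mulf_eq0 (negbTE kl) orbF => /eqP.
apply/rowP => c; rewrite mxE; have := h c; rewrite vl mul0r add0r.
by case: eqP => [-> | _].
Qed.

Lemma row_Rep l k (M : 'M['F_3]_4) i :
  row i (Rep l k *m M) = if i == l then k *m M else row i M.
Proof.
rewrite row_mul; have -> : row i (Rep l k) = if i == l then k else delta_mx 0 i.
  by apply/rowP => c; rewrite !mxE; case: (i == l); rewrite // mxE eqxx /= eq_sym.
by case: (i == l); rewrite // -rowE.
Qed.

Section Main.
Variables (a : Point) (M : 'M['F_3]_4).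
Hypothesis frM : row_free M.

Definition Lf (i : 'I_4) := aL a (row i M).

Lemma delta_free_eq (i j : 'I_4) : (row i M == row j M) = (i == j).
Proof.
apply/idP/idP => [|/eqP -> //].
rewrite !rowE => /eqP /(row_free_inj frM) /rowP /(_ i); rewrite !mxE !eqxx /=.
by case: eqP => // _ /eqP; rewrite oner_eq0.
Qed.

Lemma delta_free_opp (i j : 'I_4) : row i M != - row j M.
Proof.
apply/negP; rewrite !rowE -mulNmx => /eqP /(row_free_inj frM) /rowP /(_ i).
rewrite !mxE !eqxx /=; case: eqP => _ /eqP; first by rewrite (negbTE F3_1N1).
by rewrite oppr0 oner_eq0.
Qed.

Lemma Lf_inj : injective Lf.
Proof.
move=> i j /aL_sign [] /eqP; first by rewrite delta_free_eq => /eqP ->.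
by rewrite (negbTE (delta_free_opp _ _)).
Qed.

Lemma row_nz i : row i M != 0.
Proof.
rewrite rowE mulmx_free_eq0 //; apply/negP => /eqP /rowP /(_ i).
by rewrite !mxE !eqxx /=; apply/eqP; rewrite oner_eq0.
Qed.

Lemma notLf (k : 'rV['F_3]_4) i : (forall c, k 0 c != 0) -> aL a (k *m M) != Lf i.
Proof.
move=> kn; apply/negP => /eqP /aL_sign; rewrite /Lf rowE -mulNmx.
have [c ci] : exists c, c != i.
  by exists (if i == o0 then o1 else o0); case: (i =P o0) => [->|/eqP]; [|rewrite eq_sym].
by case => /(row_free_inj frM) E; move: (kn c); [rewrite -E | rewrite -[k]opprK -E]; rewrite !mxE (negbTE ci) /= ?oppr0 ?eqxx.
Qed.

Definition S := Lf @: [set: 'I_4].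

Lemma cardS : #|S| = 4.
Proof. by rewrite card_imset ?cardsT ?card_ord //; apply: Lf_inj. Qed.

Lemma coverS : cover S = \bigcup_i Lf i.
Proof. by rewrite cover_imset; apply: eq_bigl => i; rewrite inE. Qed.

Lemma cover_drop e l : aL a e \notin S ->
  cover ((aL a e |: S) :\ Lf l) = \bigcup_i aL a (if i == l then e else row i M).
Proof.
move=> eS; apply/setP => x; apply/bigcupP/bigcupP.
  case=> B; rewrite !inE => /andP [BL /orP [/eqP E | /imsetP [i _ E]]] xB; subst B.
    by exists l; rewrite ?eqxx.
  exists i => //; case: (i =P l) => // il; by move: BL; rewrite il eqxx.
case=> i _; case: eqP => [_ | /eqP il] xi.
  exists (aL a e) => //; rewrite !inE eqxx andbT.
  by apply: contra eS => /eqP ->; apply/imsetP; exists l.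
exists (Lf i) => //; rewrite !inE (inj_eq Lf_inj) il /=.
by apply/orP; right; apply/imsetP; exists i.
Qed.
End Main.

Lemma coverU1 (T : finType) (A : {set T}) (P : {set {set T}}) :
  cover (A |: P) = A :|: cover P.
Proof.
apply/setP => x; rewrite in_setU; apply/bigcupP/orP.
  by case=> B; rewrite !inE => /orP [/eqP -> | BP] xB; [left | right; apply/bigcupP; exists B].
case=> [xA | /bigcupP [B BP xB]]; first by exists A; rewrite ?inE ?eqxx.
by exists B; rewrite ?inE ?BP ?orbT.
Qed.

Section Main2.
Variables (a : Point) (M : 'M['F_3]_4).
Hypothesis frM : row_free M.

Lemma eS_ok (k : 'rV['F_3]_4) : (forall c, k 0 c != 0) -> aL a (k *m M) \notin S a M.
Proof.
move=> kn; apply/imsetP => [[i _ E]]; move: (notLf a frM i kn).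
by rewrite E eqxx.
Qed.

Lemma hG_ok (k : 'rV['F_3]_4) : (forall c, k 0 c != 0) ->
  forall G : {set {set Point}}, G \subset aL a (k *m M) |: S a M -> #|G| = 4 ->
  ~~ cohyperplanar (cover G).
Proof.
move=> kn G GF cG.
have eS := eS_ok kn.
set F := aL a (k *m M) |: S a M in GF *.
have cF : #|F| = 5 by rewrite cardsU1 eS (cardS a frM).
have : #|F :\: G| = 1 by rewrite cardsD (setIidPr GF) cF cG.
case/eqP/cards1P => L EL.
have : L \in F :\: G by rewrite EL inE.
rewrite inE => /andP [LG LF].
have GE : G = F :\ L.
  apply/setP => X; rewrite in_setD1.
  have := congr1 (fun A : {set {set Point}} => X \in A) EL; rewrite in_setD in_set1 /=.
  case XG: (X \in G); case XF: (X \in F) => //=.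
    by move=> <-.
    by rewrite (subsetP GF X XG) in XF.
  by move=> <-.
  by rewrite andbF.
rewrite GE; move: LF; rewrite !inE => /orP [/eqP -> | /imsetP [l _ ->]].
  by rewrite setU1K // coverS cohypB negbK.
rewrite (cover_drop frM) //.
have -> : \bigcup_i aL a (if i == l then k *m M else row i M) =
          \bigcup_i aL a (row i (Rep l k *m M)).
  by apply: eq_bigr => i _; rewrite row_Rep.
by rewrite cohypB negbK /row_free mxrankMfree // -/(row_free _) Rep_free.
Qed.

Lemma dir1 (k : 'rV['F_3]_4) : (forall c, k 0 c != 0) ->
  demicap a (\bigcup_i Lf a M i :|: aL a (k *m M)).
Proof.
move=> kn.
have eS := eS_ok kn.
set F := aL a (k *m M) |: S a M.
have cF : #|F| = 5 by rewrite cardsU1 eS (cardS a frM).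
have e0 : k *m M != 0.
  rewrite mulmx_free_eq0 //; apply/negP => /eqP /rowP /(_ o0); rewrite !mxE => k0.
  by move: (kn o0); rewrite k0 eqxx.
have alF : forall L, L \in F -> aline a L.
  move=> L; rewrite !inE => /orP [/eqP -> | /imsetP [i _ ->]]; apply: aline_aL => //.
  exact: row_nz frM i.
have covF : cover F = \bigcup_i Lf a M i :|: aL a (k *m M).
  by rewrite coverU1 coverS setUC.
rewrite -covF /demicap.
apply/andP; split; [apply/andP; split|].
- by apply: cap_lines alF _ (hG_ok kn); rewrite cF.
- have tF : trivIset F.
    apply/trivIsetP => A B AF BF AB; rewrite -setI_eq0; apply/eqP/setP => x; rewrite !inE.
    apply/negP => /andP [xA xB].
    have [u _ Eu] := alineP (alF _ AF); have [v _ Ev] := alineP (alF _ BF).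
    rewrite Eu Ev in xA xB AB.
    by rewrite (aL_meet xA xB) eqxx in AB.
  move/eqP: tF => <-.
  rewrite (eq_bigr (fun _ => 2%N)) ?sum_nat_const ?cF //.
  by move=> B BF; have [u u0 ->] := alineP (alF _ BF); exact: card_aL.
- apply/existsP; exists F; rewrite cF eqxx /=; apply/and3P; split => //.
    by apply/forallP => L; apply/implyP; exact: alF.
  apply/forallP => G; apply/implyP => /andP [GF /eqP cG]; exact: hG_ok.
Qed.

Lemma dir2 D : demicap a D -> \bigcup_i Lf a M i \subset D ->
  exists k : 'rV['F_3]_4, (forall c, k 0 c != 0) /\ D = \bigcup_i Lf a M i :|: aL a (k *m M).
Proof.
case/andP => /andP [_ _] /existsP [F /and4P [/eqP cF /forallP alF /eqP DF /forallP hG]] UD.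
have alF' : forall L, L \in F -> aline a L by move=> L LF; exact: (implyP (alF L) LF).
have LfF : forall i, Lf a M i \in F.
  move=> i; have : a + row i M \in cover F.
    by rewrite -DF; apply: (subsetP UD); apply/bigcupP; exists i => //; rewrite /Lf !inE eqxx.
  case/bigcupP => L LF xL; have [u u0 Eu] := alineP (alF' _ LF).
  rewrite Eu in xL; move: (aL_dir xL); rewrite (addrC a) addrK => E.
  by rewrite /Lf E -Eu.
have SF : S a M \subset F by apply/subsetP => L /imsetP [i _ ->]; exact: LfF.
have : #|F :\: S a M| = 1 by rewrite cardsD (setIidPr SF) cF (cardS a frM).
case/eqP/cards1P => L5 E5.
have : L5 \in F :\: S a M by rewrite E5 inE.
rewrite inE => /andP [L5S L5F].
have FE : F = L5 |: S a M.
  apply/setP => X; rewrite inE; case XS: (X \in S a M); first by rewrite orbT (subsetP SF).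
  have := congr1 (fun A : {set {set Point}} => X \in A) E5; rewrite !inE XS /= => ->.
  by rewrite orbF.
have [e e0 Ee] := alineP (alF' _ L5F).
have uM : M \in unitmx by rewrite -row_free_unit.
set k := e *m invmx M.
have ek : e = k *m M by rewrite /k mulmxKV.
have kn : forall c, k 0 c != 0.
  move=> l; have := hG (F :\ Lf a M l); rewrite subD1set /=.
  have -> : #|F :\ Lf a M l| = 4.
    by have := cardsD1 (Lf a M l) F; rewrite LfF cF add1n => -[<-].
  rewrite eqxx /= FE Ee (cover_drop frM) -?Ee //.
  have -> : \bigcup_i aL a (if i == l then e else row i M) =
            \bigcup_i aL a (row i (Rep l k *m M)).
    by apply: eq_bigr => i _; rewrite row_Rep -ek.
  by rewrite cohypB negbK /row_free mxrankMfree // -/(row_free _) Rep_free.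
exists k; split => //.
by rewrite DF FE Ee coverU1 coverS setUC ek.
Qed.

End Main2.

Definition sg (b : bool) : 'F_3 := if b then 1 else -1.
Definition kb (b : bool * bool * bool) : 'rV['F_3]_4 :=
  \row_c nth 0 [:: sg b.1.1; sg b.1.2; sg b.2; 1] c.

Lemma sg_nz b : sg b != 0.
Proof. by case: b; rewrite /sg ?oppr_eq0 oner_eq0. Qed.

Lemma kb_nz b c : kb b 0 c != 0.
Proof.
by case: (ord4 c) => -> ; rewrite mxE /= ?sg_nz ?oner_eq0.
Qed.

Lemma sg_inj : injective sg.
Proof.
by case; case => //= /eqP; rewrite ?(negbTE F3_1N1) // eq_sym (negbTE F3_1N1).
Qed.

Lemma sgE (x : 'F_3) : x != 0 -> sg (x == 1) = x.
Proof.
by case/F3_nz => ->; rewrite /sg ?eqxx // eq_sym (negbTE F3_1N1).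
Qed.

Lemma main_count a (M : 'M['F_3]_4) : row_free M ->
  #|[set D | demicap a D & \bigcup_i Lf a M i \subset D]| = 8.
Proof.
move=> frM.
set U := \bigcup_i Lf a M i.
have -> : [set D | demicap a D & U \subset D] =
          (fun b => U :|: aL a (kb b *m M)) @: [set: bool * bool * bool].
  apply/setP => D; rewrite inE; apply/andP/imsetP.
    case=> dD UD; have [k [kn ->]] := dir2 frM dD UD.
    set s := k 0 o3.
    have s1 : s = 1 \/ s = -1 := F3_nz (kn o3).
    have s0 : s != 0 := kn o3.
    exists (s * k 0 o0 == 1, s * k 0 o1 == 1, s * k 0 o2 == 1); first by rewrite inE.
    have -> : kb (s * k 0 o0 == 1, s * k 0 o1 == 1, s * k 0 o2 == 1) = s *: k.
      apply/rowP => c; rewrite !mxE; case: (ord4 c) => -> /=;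
        rewrite ?sgE ?mulf_neq0 ?kn //.
      by case: s1 => E; rewrite /s in E *; rewrite E ?mulr1 ?mulrNN ?mulr1.
    by rewrite -scalemxAl; case: s1 => ->; rewrite ?scale1r // scaleN1r aLN.
  case=> b _ ->; split; [exact: dir1 (kb_nz b) | exact: subsetUl].
rewrite card_imset ?cardsT ?card_prod ?card_bool //.
move=> b b' E.
have : a + kb b *m M \in U :|: aL a (kb b' *m M) by rewrite -E !inE eqxx orbT.
rewrite in_setU => /orP [/bigcupP [i _ xi] | /aL_pt []].
  have := notLf a frM i (kb_nz b); rewrite /Lf in xi *.
  by case: (aL_pt xi) => ->; rewrite ?aLN eqxx.
  move/(row_free_inj frM) => /rowP h.
  have h0 := h o0; have h1 := h o1; have h2 := h o2; rewrite !mxE /= in h0 h1 h2.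
  move: h0 h1 h2; clear E h; case: b => [[b1 b2] b3]; case: b' => [[c1 c2] c3] /=.
  by move=> /sg_inj -> /sg_inj -> /sg_inj ->.
rewrite -mulNmx => /(row_free_inj frM) /rowP /(_ o3); rewrite !mxE /=.
move/eqP => H; exfalso; move: H; exact: (negP F3_1N1).
Qed.

Unset Implicit Arguments.
Set Strict Implicit.
Local Close Scope ring_scope.

Theorem corollary3p7 (a : Point) (L1 L2 L3 L4 : {set Point}) :
  aline a L1 -> aline a L2 -> aline a L3 -> aline a L4 ->
  L1 != L2 -> L1 != L3 -> L1 != L4 -> L2 != L3 -> L2 != L4 -> L3 != L4 ->
  ~~ cohyperplanar (L1 :|: L2 :|: L3 :|: L4) ->
  #|[set D : {set Point} | demicap a D & (L1 :|: L2 :|: L3 :|: L4) \subset D]| = 8.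
Proof.
move=> h1 h2 h3 h4 _ _ _ _ _ _ nc.
have [d1 _ E1] := alineP h1; have [d2 _ E2] := alineP h2.
have [d3 _ E3] := alineP h3; have [d4 _ E4] := alineP h4.
have UE : L1 :|: L2 :|: L3 :|: L4 = \bigcup_i aL a (row i (m4 d1 d2 d3 d4)).
  by rewrite cover_m4 E1 E2 E3 E4.
rewrite UE cohypB negbK in nc; rewrite UE.
exact: main_count nc.
Qed.
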